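(* Let $R$ be a ring. The following statements are equivalent: (1) $R$ is a left localizable ring with $|\max\mathrm{Den}_l(R)|<\infty$; (2) there are left denominator sets $S_1',\ldots,S_n'$ of $R$ such that the rings $R_i:=S_i'^{-1}R$, $i=1,\ldots,n$, are division rings and the map $\sigma:=\prod_{i=1}^n\sigma_i:R\to\prod_{i=1}^nR_i$, $r\mapsto(\sigma_1(r),\ldots,\sigma_n(r))$, is injective, where $\sigma_i:R\to R_i$, $r\mapsto\frac{r}{1}$. Moreover, if these conditions hold and in (2) none of the rings $R_i$ can be omitted while preserving the injectivity of $\sigma$, then $n=|\max\mathrm{Den}_l(R)|$ and $\max\mathrm{Den}_l(R)=\{S_1,\ldots,S_n\}$, where $S_i:=\sigma_i^{-1}(R_i^* )$ and $R_i^*$ is the group of units of $R_i$.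
   Context: All rings are associative with $1$. A multiplicative subset $S$ of $R$ ($1\in S$, $0\notin S$, closed under multiplication) is a left Ore set if $Sr\cap Rs\neq\emptyset$ for all $r\in R$, $s\in S$. A left Ore set $S$ is a left denominator set if $rs=0$ ($r\in R$, $s\in S$) implies $tr=0$ for some $t\in S$; $S^{-1}R$ is the left localization. $\max\mathrm{Den}_l(R)$ is the set of maximal elements, under inclusion, of the set of left denominator sets of $R$. A ring $R$ is left localizable if every nonzero $r\in R$ lies in some left denominator set. *)

(* Defs.v *)
From HB Require Import structures.
From mathcomp Require Import all_boot all_order all_algebra.
From mathcomp Require Import boolp classical_sets cardinality.
Set Implicit Arguments. Unset Strict Implicit. Unset Printing Implicit Defensive.
Import GRing.Theory.
Local Open Scope ring_scope.
Local Open Scope classical_set_scope.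

Definition mult_subset (R : pzRingType) (S : set R) : Prop :=
  S 1 /\ ~ S 0 /\ (forall a b, S a -> S b -> S (a * b)).

Definition left_ore_set (R : pzRingType) (S : set R) : Prop :=
  mult_subset S /\
  (forall r s, S s -> exists s' r', S s' /\ s' * r = r' * s).

Definition left_den_set (R : pzRingType) (S : set R) : Prop :=
  left_ore_set S /\
  (forall r s, S s -> r * s = 0 -> exists t, S t /\ t * r = 0).

Definition maxDen_l (R : pzRingType) : set (set R) :=
  [set S | left_den_set S /\ (forall T, left_den_set T -> S `<=` T -> T = S)].

Definition left_localizable (R : pzRingType) : Prop :=
  forall r : R, r != 0 -> exists S, left_den_set S /\ S r.

(* (Q, sigma) is a left localization S^{-1}R of R at S (the left ring of
   fractions, characterised up to isomorphism as usual):
   sigma s is a unit for s in S, every element is (sigma s)^-1 (sigma r),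
   and ker sigma = {r | s r = 0 for some s in S}. *)
Definition is_left_localization (R : pzRingType) (S : set R)
    (Q : unitRingType) (sigma : {rmorphism R -> Q}) : Prop :=
  (forall s, S s -> sigma s \is a GRing.unit) /\
  (forall q : Q, exists s r, S s /\ q = (sigma s)^-1 * sigma r) /\
  (forall r, sigma r = 0 <-> exists s, S s /\ s * r = 0).

Definition division_ring (Q : unitRingType) : Prop :=
  forall x : Q, x != 0 -> x \is a GRing.unit.

Definition cond2_data (R : pzRingType) (n : nat) (S' : 'I_n -> set R)
    (Q : 'I_n -> unitRingType) (sigma : forall i, {rmorphism R -> Q i}) : Prop :=
  (forall i, left_den_set (S' i)) /\
  (forall i, is_left_localization (S' i) (sigma i)) /\
  (forall i, division_ring (Q i)) /\
  (forall r1 r2 : R, (forall i, sigma i r1 = sigma i r2) -> r1 = r2).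
Arguments maxDen_l : clear implicits.

(* Main.v *)
Require Import Defs.
From HB Require Import structures.
From mathcomp Require Import all_boot all_order all_algebra.
From mathcomp Require Import boolp classical_sets cardinality functions.
Set Implicit Arguments. Unset Strict Implicit. Unset Printing Implicit Defensive.
Import GRing.Theory.
Local Open Scope ring_scope.


Module OreFrac.
Local Open Scope quotient_scope.
Section OreFracS.
Variable D : nzRingType.
Hypothesis dom : forall a b : D, a * b = 0 -> a = 0 \/ b = 0.
Hypothesis ore : forall a b : D, b != 0 -> exists u v, u != 0 /\ u * a = v * b.

Lemma mulf_nz (a b : D) : a != 0 -> b != 0 -> a * b != 0.
Proof. move=> /eqP a0 /eqP b0; apply/eqP => /dom [] //. Qed.

Lemma mulIf' (s a b : D) : s != 0 -> a * s = b * s -> a = b.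
Proof.
move=> /eqP s0 e; apply/eqP; rewrite -subr_eq0; apply/eqP.
by case: (@dom (a - b) s) => //; rewrite mulrBl e subrr.
Qed.

Lemma mulfI' (s a b : D) : s != 0 -> s * a = s * b -> a = b.
Proof.
move=> /eqP s0 e; apply/eqP; rewrite -subr_eq0; apply/eqP.
by case: (@dom s (a - b)) => //; rewrite mulrBr e subrr.
Qed.

Lemma ore_ex (a b : D) : exists uv : D * D, (uv.1 != 0) && ((b == 0) || (uv.1 * a == uv.2 * b)).
Proof.
have [->|b0] := eqVneq b 0; first by exists (1, 0); rewrite /= oner_neq0.
have [u [v [u0 e]]] := ore a b0; exists (u, v).
by rewrite /= u0 e eqxx.
Qed.

Definition orec a b := xchoose (ore_ex a b).

Lemma oreP a b : b != 0 -> (orec a b).1 != 0 /\ (orec a b).1 * a = (orec a b).2 * b.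
Proof.
move=> b0; have /andP[-> /orP[]] := xchooseP (ore_ex a b); first by rewrite (negbTE b0).
by move/eqP.
Qed.

Definition Pr := {p : D * D | p.1 != 0}.
Definition pr0 : Pr := exist _ (1, 0) (oner_neq0 D).
Definition Fr (s r : D) : Pr := insubd pr0 (s, r).
Definition den (x : Pr) := (val x).1.
Definition num (x : Pr) := (val x).2.
Lemma denP x : den x != 0. Proof. exact: valP x. Qed.
Lemma den_Fr s r : s != 0 -> den (Fr s r) = s.
Proof. by move=> s0; rewrite /den /Fr val_insubd /= s0. Qed.
Lemma num_Fr s r : s != 0 -> num (Fr s r) = r.
Proof. by move=> s0; rewrite /num /Fr val_insubd /= s0. Qed.

Definition eqvP_ (x y : Pr) := forall u v, u * den x = v * den y -> u * num x = v * num y.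
Definition eqv x y : bool := `[< eqvP_ x y >].
Lemma eqvP x y : reflect (eqvP_ x y) (eqv x y).
Proof. exact: asboolP. Qed.

Lemma eqv_ex (x y : Pr) u v : u != 0 -> u * den x = v * den y -> u * num x = v * num y -> eqv x y.
Proof.
move=> u0 e1 e2; apply/eqvP => a b e.
have [c [d [c0 cd]]] := ore a u0.
have dvcb : d * v = c * b.
  apply: (mulIf' (denP y)); rewrite -mulrA -e1 mulrA -cd -!mulrA e //.
apply: (mulfI' c0); rewrite mulrA cd -mulrA e2 mulrA dvcb -mulrA //.
Qed.

Lemma eqv_refl : reflexive eqv.
Proof.
move=> x; apply/eqvP => u v e; by rewrite (mulIf' (denP x) e).
Qed.

Lemma eqv_sym : symmetric eqv.
Proof.
move=> x y; apply/eqvP/eqvP => H u v e; by rewrite (H v u (esym e)).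
Qed.

Lemma eqv_trans : transitive eqv.
Proof.
move=> y x z /eqvP xy /eqvP yz; apply/eqvP => u w e.
have [u0|u0] := eqVneq u 0.
  have w0 : w = 0.
    apply: (mulIf' (denP z)); by rewrite -e u0 !mul0r.
  by rewrite u0 w0 !mul0r.
have [s' [r' [s0 e1]]] := ore (den y) (mulf_nz u0 (denP x)).
have r0 : r' != 0.
  apply/eqP => r0; move: e1; rewrite r0 mul0r => /eqP.
  by rewrite (negbTE (mulf_nz s0 (denP y))).
have e2 : r' * u * num x = s' * num y by apply: xy; rewrite -mulrA -e1.
have e3 : s' * num y = r' * w * num z by apply: yz; rewrite e1 -mulrA e mulrA.
apply: (mulfI' r0); by rewrite mulrA e2 e3 mulrA.
Qed.


Lemma eqv_Fr s1 r1 s2 r2 : s1 != 0 -> s2 != 0 ->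
  (forall u v, u * s1 = v * s2 -> u * r1 = v * r2) -> eqv (Fr s1 r1) (Fr s2 r2).
Proof.
move=> h1 h2 H; apply/eqvP => u v; rewrite !den_Fr // !num_Fr //; exact: H.
Qed.

Lemma eqv_FrE s1 r1 s2 r2 : s1 != 0 -> s2 != 0 -> eqv (Fr s1 r1) (Fr s2 r2) ->
  (forall u v, u * s1 = v * s2 -> u * r1 = v * r2).
Proof.
move=> h1 h2 /eqvP H u v; have := H u v; rewrite !den_Fr // !num_Fr //.
Qed.

Lemma Fr_den_num x : Fr (den x) (num x) = x.
Proof. by case: x => [[a b] h]; apply: val_inj; rewrite /Fr val_insubd /den /num /= h. Qed.

Canonical eqv_equiv := EquivRel eqv eqv_refl eqv_sym eqv_trans.
Definition type := {eq_quot eqv}.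
HB.instance Definition _ : EqQuotient _ eqv type := EqQuotient.on type.
HB.instance Definition _ := Choice.on type.

Lemma eqv_repr x : eqv (repr (\pi_type x)) x.
Proof. by rewrite -eqmodE reprK. Qed.

Definition addf (x y : Pr) : Pr :=
  let uv := orec (den x) (den y) in Fr (uv.1 * den x) (uv.1 * num x + uv.2 * num y).
Definition oppf (x : Pr) : Pr := Fr (den x) (- num x).
Definition mulf (x y : Pr) : Pr :=
  let uv := orec (num x) (den y) in Fr (uv.1 * den x) (uv.2 * num y).
Definition invf (x : Pr) : Pr := if num x != 0 then Fr (num x) (den x) else x.
Definition unitf (x : Pr) : bool := num x != 0.

Lemma addf_eqv x x' y y' : eqv x x' -> eqv y y' -> eqv (addf x y) (addf x' y').
Proof.
move=> /eqvP xx /eqvP yy; rewrite /addf.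
have [u0 e] := oreP (den x) (denP y).
have [u0' e'] := oreP (den x') (denP y').
move: (orec (den x) (den y)) (orec (den x') (den y')) u0 e u0' e' => [u v] [u' v'] /= u0 e u0' e'.
apply: eqv_Fr; try exact: mulf_nz (denP _).
move=> a b ab; rewrite !mulrDr !mulrA.
rewrite (xx (a * u) (b * u')); last by rewrite -!mulrA.
rewrite (yy (a * v) (b * v')) //.
rewrite -!mulrA -e -e' !mulrA -!mulrA; exact: ab.
Qed.

Lemma oppf_eqv x x' : eqv x x' -> eqv (oppf x) (oppf x').
Proof.
move=> /eqvP xx; apply: eqv_Fr; try exact: denP.
by move=> a b ab; rewrite !mulrN (xx a b ab).
Qed.

Lemma mulf_eqv x x' y y' : eqv x x' -> eqv y y' -> eqv (mulf x y) (mulf x' y').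
Proof.
move=> /eqvP xx /eqvP yy; rewrite /mulf.
have [u0 e] := oreP (num x) (denP y).
have [u0' e'] := oreP (num x') (denP y').
move: (orec (num x) (den y)) (orec (num x') (den y')) u0 e u0' e' => [u v] [u' v'] /= u0 e u0' e'.
apply: eqv_Fr; try exact: mulf_nz (denP _).
move=> a b ab; rewrite !mulrA.
apply: yy; rewrite -!mulrA -e -e' !mulrA.
by apply: xx; rewrite -!mulrA.
Qed.

Lemma num0_eqv x x' : eqv x x' -> (num x == 0) = (num x' == 0).
Proof.
move=> /eqvP xx.
have [u [v [u0 e]]] := ore (den x) (denP x').
have v0 : v != 0.
  by apply/eqP => v0; move: e; rewrite v0 mul0r => /eqP; rewrite (negbTE (mulf_nz u0 (denP x))).
have := xx u v e => e2.
apply/eqP/eqP => h.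
  by apply: (mulfI' v0); rewrite -e2 h !mulr0.
by apply: (mulfI' u0); rewrite e2 h !mulr0.
Qed.

Lemma invf_eqv x x' : eqv x x' -> eqv (invf x) (invf x').
Proof.
move=> xx; rewrite /invf -(num0_eqv xx).
case: ifP => // n0.
move: xx => /eqvP xx.
have [u [v [u0 e]]] := ore (den x) (denP x').
have := xx u v e => e2.
have n0' : num x' != 0 by rewrite -(num0_eqv (introT (eqvP _ _) xx)) n0.
apply: (@eqv_ex _ _ u v u0); rewrite ?den_Fr ?num_Fr //; exact: n0.
Qed.

Lemma unitf_eqv x x' : eqv x x' -> unitf x = unitf x'.
Proof. by move=> xx; rewrite /unitf (num0_eqv xx). Qed.

Definition zero : type := lift_cst type (Fr 1 0).
Definition one : type := lift_cst type (Fr 1 1).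
Definition add := lift_op2 type addf.
Definition opp := lift_op1 type oppf.
Definition mul := lift_op2 type mulf.
Definition inv := lift_op1 type invf.
Definition unit := lift_fun1 type unitf.

Lemma pi_add : {morph \pi : x y / addf x y >-> add x y}.
Proof.
move=> x y; unlock add; apply/eqmodP => /=.
by apply: addf_eqv; rewrite eqv_sym eqv_repr.
Qed.
Canonical pi_add_morph := PiMorph2 pi_add.
Lemma pi_opp : {morph \pi : x / oppf x >-> opp x}.
Proof.
move=> x; unlock opp; apply/eqmodP => /=.
by apply: oppf_eqv; rewrite eqv_sym eqv_repr.
Qed.
Canonical pi_opp_morph := PiMorph1 pi_opp.
Lemma pi_mul : {morph \pi : x y / mulf x y >-> mul x y}.
Proof.
move=> x y; unlock mul; apply/eqmodP => /=.
by apply: mulf_eqv; rewrite eqv_sym eqv_repr.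
Qed.
Canonical pi_mul_morph := PiMorph2 pi_mul.
Lemma pi_inv : {morph \pi : x / invf x >-> inv x}.
Proof.
move=> x; unlock inv; apply/eqmodP => /=.
by apply: invf_eqv; rewrite eqv_sym eqv_repr.
Qed.
Canonical pi_inv_morph := PiMorph1 pi_inv.
Lemma pi_unit x : unit (\pi_type x) = unitf x.
Proof. by unlock unit; apply: unitf_eqv; exact: eqv_repr. Qed.
Canonical pi_zero_morph := PiConst zero.
Canonical pi_one_morph := PiConst one.


Lemma den_addf x y : den (addf x y) = (orec (den x) (den y)).1 * den x.
Proof. by rewrite /addf den_Fr // mulf_nz ?denP // (oreP _ (denP y)).1. Qed.
Lemma num_addf x y : num (addf x y) =
  (orec (den x) (den y)).1 * num x + (orec (den x) (den y)).2 * num y.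
Proof. by rewrite /addf num_Fr // mulf_nz ?denP // (oreP _ (denP y)).1. Qed.
Lemma den_mulf x y : den (mulf x y) = (orec (num x) (den y)).1 * den x.
Proof. by rewrite /mulf den_Fr // mulf_nz ?denP // (oreP _ (denP y)).1. Qed.
Lemma num_mulf x y : num (mulf x y) = (orec (num x) (den y)).2 * num y.
Proof. by rewrite /mulf num_Fr // mulf_nz ?denP // (oreP _ (denP y)).1. Qed.
Lemma den_oppf x : den (oppf x) = den x.
Proof. by rewrite /oppf den_Fr // denP. Qed.
Lemma num_oppf x : num (oppf x) = - num x.
Proof. by rewrite /oppf num_Fr // denP. Qed.
Lemma den_Fr1 r : den (Fr 1 r) = 1. Proof. by rewrite den_Fr // oner_neq0. Qed.
Lemma num_Fr1 r : num (Fr 1 r) = r. Proof. by rewrite num_Fr // oner_neq0. Qed.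

Ltac orec_gen a b H :=
  let h := fresh "h" in
  have h := oreP a H; move: (orec a b) h => [? ?] /= [? ?].

Lemma f_addA : associative add.
Proof.
elim/quotW=> x; elim/quotW=> y; elim/quotW=> z; rewrite !piE.
apply/eqmodP => /=; rewrite eqv_sym; apply/eqvP => c d.
rewrite !(den_addf, num_addf).
have [hu e] := oreP (den x) (denP y).
move: (orec (den x) (den y)) hu e => [u v] /= hu e.
have [ha e2] := oreP (den y) (denP z).
move: (orec (den y) (den z)) ha e2 => [a b] /= ha e2.
rewrite ?(den_addf, num_addf) /=.
have [hu' e3] := oreP (u * den x) (denP z).
move: (orec (u * den x) (den z)) hu' e3 => [u' v'] /= hu' e3.
have [ha' e4] := oreP (den x) (mulf_nz ha (denP y)).
move: (orec (den x) (a * den y)) ha' e4 => [a' b'] /= ha' e4.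
move=> H.
have E1 : c * u' * u = d * a' by apply: (mulIf' (denP x)); rewrite -!mulrA H.
have E2 : c * u' * v = d * b' * a.
  apply: (mulIf' (denP y)); rewrite -!mulrA -e !mulrA E1 -!mulrA e4 !mulrA //.
have E3 : c * v' = d * b' * b.
  apply: (mulIf' (denP z)); rewrite -!mulrA -e3 !mulrA E1 -!mulrA e4 e2 !mulrA //.
rewrite !mulrDr !mulrA E1 E3 -addrA; congr (_ + _).
by rewrite E2.
Qed.

Lemma f_addC : commutative add.
Proof.
elim/quotW=> x; elim/quotW=> y; rewrite !piE.
apply/eqmodP => /=; apply/eqvP => c d.
rewrite !(den_addf, num_addf).
have [hu e] := oreP (den x) (denP y).
move: (orec (den x) (den y)) hu e => [u v] /= hu e.
have [ha e2] := oreP (den y) (denP x).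
move: (orec (den y) (den x)) ha e2 => [a b] /= ha e2 H.
have E1 : c * v = d * a by apply: (mulIf' (denP y)); rewrite -!mulrA -e H.
have E2 : c * u = d * b by apply: (mulIf' (denP x)); rewrite -!mulrA H e2.
by rewrite !mulrDr !mulrA E1 E2 addrC.
Qed.

Lemma f_add0r : left_id zero add.
Proof.
elim/quotW=> x; rewrite !piE.
apply/eqmodP => /=; apply/eqvP => c d.
rewrite !(den_addf, num_addf) den_Fr1 num_Fr1.
have [hu e] := oreP 1 (denP x).
move: (orec 1 (den x)) hu e => [u v] /= hu e H.
rewrite mulr0 add0r mulrA; congr (_ * _).
by apply: (mulIf' (denP x)); rewrite -mulrA -e -H.
Qed.

Lemma f_addNr : left_inverse zero opp add.
Proof.
elim/quotW=> x; rewrite !piE.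
apply/eqmodP => /=; apply/eqvP => c d.
rewrite !(den_addf, num_addf) den_Fr1 num_Fr1 den_oppf num_oppf.
have [hu e] := oreP (den x) (denP x).
move: (orec (den x) (den x)) hu e => [u v] /= hu e H.
by rewrite (mulIf' (denP x) e) mulrN addNr !mulr0.
Qed.

HB.instance Definition _ := GRing.isZmodule.Build type f_addA f_addC f_add0r f_addNr.

Lemma f_mulA : associative mul.
Proof.
elim/quotW=> x; elim/quotW=> y; elim/quotW=> z; rewrite !piE.
apply/eqmodP => /=; rewrite eqv_sym; apply/eqvP => c d.
rewrite !(den_mulf, num_mulf).
have [hu e] := oreP (num x) (denP y).
move: (orec (num x) (den y)) hu e => [u v] /= hu e.
have [ha e2] := oreP (num y) (denP z).
move: (orec (num y) (den z)) ha e2 => [a b] /= ha e2.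
rewrite ?(den_mulf, num_mulf) /=.
have [hu' e3] := oreP (v * num y) (denP z).
move: (orec (v * num y) (den z)) hu' e3 => [u' v'] /= hu' e3.
have [ha' e4] := oreP (num x) (mulf_nz ha (denP y)).
move: (orec (num x) (a * den y)) ha' e4 => [a' b'] /= ha' e4.
move=> H.
have E1 : c * u' * u = d * a' by apply: (mulIf' (denP x)); rewrite -!mulrA H.
have E2 : c * u' * v = d * b' * a.
  apply: (mulIf' (denP y)); rewrite -!mulrA -e !mulrA E1 -!mulrA e4 !mulrA //.
have E3 : c * v' = d * b' * b.
  apply: (mulIf' (denP z)); rewrite -!mulrA -e3 !mulrA E2 -!mulrA e2 !mulrA //.
by rewrite !mulrA E3.
Qed.

Lemma f_mul1r : left_id one mul.
Proof.
elim/quotW=> x; rewrite !piE.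
apply/eqmodP => /=; apply/eqvP => c d.
rewrite !(den_mulf, num_mulf) den_Fr1 num_Fr1.
have [hu e] := oreP 1 (denP x).
move: (orec 1 (den x)) hu e => [u v] /= hu e H.
rewrite mulrA; congr (_ * _).
by apply: (mulIf' (denP x)); rewrite -mulrA -e -H.
Qed.

Lemma f_mulr1 : right_id one mul.
Proof.
elim/quotW=> x; rewrite !piE.
apply/eqmodP => /=; apply/eqvP => c d.
rewrite !(den_mulf, num_mulf) den_Fr1 num_Fr1.
have [hu e] := oreP (num x) (oner_neq0 D).
move: (orec (num x) 1) hu e => [u v] /= hu e H.
have E : c * u = d by apply: (mulIf' (denP x)); rewrite -mulrA H.
by rewrite mulr1 -E -mulrA e mulr1.
Qed.

Lemma f_mulDl : left_distributive mul add.
Proof.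
elim/quotW=> x; elim/quotW=> y; elim/quotW=> z; rewrite !piE.
apply/eqmodP => /=; apply/eqvP => c d.
rewrite !(den_mulf, num_mulf, den_addf, num_addf).
have [hu e] := oreP (den x) (denP y).
move: (orec (den x) (den y)) hu e => [u v] /= hu e.
have [ha e2] := oreP (num x) (denP z).
move: (orec (num x) (den z)) ha e2 => [a b] /= ha e2.
have [he e3] := oreP (num y) (denP z).
move: (orec (num y) (den z)) he e3 => [e' f] /= he e3.
rewrite ?(den_mulf, num_mulf, den_addf, num_addf) /=.
have [hp e4] := oreP (u * num x + v * num y) (denP z).
move: (orec (u * num x + v * num y) (den z)) hp e4 => [p q] /= hp e4.
have [hg e5] := oreP (a * den x) (mulf_nz he (denP y)).
move: (orec (a * den x) (e' * den y)) hg e5 => [g h] /= hg e5.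
move=> H.
have E1 : c * p * u = d * g * a by apply: (mulIf' (denP x)); rewrite -!mulrA H.
have E2 : c * p * v = d * h * e'.
  apply: (mulIf' (denP y)); rewrite -!mulrA -e !mulrA E1 -!mulrA e5 !mulrA //.
have E3 : c * q = d * g * b + d * h * f.
  apply: (mulIf' (denP z)); rewrite mulrDl -!mulrA -e4 -e2 -e3 !mulrDr !mulrA E1 E2 //.
by rewrite !mulrA E3 mulrDl !mulrDr !mulrA.
Qed.

Lemma f_mulDr : right_distributive mul add.
Proof.
elim/quotW=> x; elim/quotW=> y; elim/quotW=> z; rewrite !piE.
apply/eqmodP => /=; apply/eqvP => c d.
rewrite !(den_mulf, num_mulf, den_addf, num_addf).
have [hu e] := oreP (den y) (denP z).
move: (orec (den y) (den z)) hu e => [u v] /= hu e.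
have [ha e2] := oreP (num x) (denP y).
move: (orec (num x) (den y)) ha e2 => [a b] /= ha e2.
have [he e3] := oreP (num x) (denP z).
move: (orec (num x) (den z)) he e3 => [e' f] /= he e3.
rewrite ?(den_mulf, num_mulf, den_addf, num_addf) /=.
have [hp e4] := oreP (num x) (mulf_nz hu (denP y)).
move: (orec (num x) (u * den y)) hp e4 => [p q] /= hp e4.
have [hg e5] := oreP (a * den x) (mulf_nz he (denP x)).
move: (orec (a * den x) (e' * den x)) hg e5 => [g h] /= hg e5.
move=> H.
have E1 : c * p = d * g * a by apply: (mulIf' (denP x)); rewrite -!mulrA H.
have E0 : g * a = h * e' by apply: (mulIf' (denP x)); rewrite -!mulrA e5.
have E2 : c * q * u = d * g * b.
  apply: (mulIf' (denP y)); rewrite -!mulrA -e4 -e2 !mulrA E1 //.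
have E3 : c * q * v = d * h * f.
  apply: (mulIf' (denP z)); rewrite -!mulrA -e -e3 !mulrA E2.
  by rewrite -!mulrA -e2 !mulrA -(mulrA d g a) E0 !mulrA.
by rewrite mulrDr !mulrDr !mulrA E2 E3.
Qed.

Lemma f_one_neq0 : one != zero.
Proof.
rewrite !piE; apply/negP => /eqvP /(_ 1 1).
rewrite !den_Fr1 !num_Fr1 => /(_ erefl); rewrite !mul1r; exact/eqP/oner_neq0.
Qed.

HB.instance Definition _ := GRing.Zmodule_isNzRing.Build type
  f_mulA f_mul1r f_mulr1 f_mulDl f_mulDr f_one_neq0.


Lemma eqv_01 t : t != 0 -> ~~ eqv (Fr t 0) (Fr 1 1).
Proof.
move=> t0; apply/negP => /eqvP.
have [u [v [u0 e]]] := ore t (oner_neq0 D).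
move=> /(_ u v); rewrite !den_Fr ?oner_neq0 // !num_Fr ?oner_neq0 // => /(_ e).
rewrite mulr0 mulr1 => v0; move: e; rewrite -v0 mulr1 => /eqP.
by rewrite (negbTE (mulf_nz u0 t0)).
Qed.

Lemma f_mulVr : {in unit, left_inverse one inv mul}.
Proof.
elim/quotW=> x; rewrite /in_mem /= pi_unit /unitf => nx; rewrite !piE.
apply/eqmodP => /=; rewrite /invf nx; apply/eqvP => c d.
rewrite den_mulf num_mulf den_Fr1 num_Fr1 den_Fr // num_Fr //.
have [hu e] := oreP (den x) (denP x).
move: (orec (den x) (den x)) hu e => [u v] /= hu e H.
by rewrite -(mulIf' (denP x) e).
Qed.

Lemma f_divrr : {in unit, right_inverse one inv mul}.
Proof.
elim/quotW=> x; rewrite /in_mem /= pi_unit /unitf => nx; rewrite !piE.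
apply/eqmodP => /=; rewrite /invf nx; apply/eqvP => c d.
rewrite den_mulf num_mulf den_Fr1 num_Fr1 num_Fr // den_Fr //.
have [hu e] := oreP (num x) nx.
move: (orec (num x) (num x)) hu e => [u v] /= hu e H.
by rewrite -(mulIf' nx e).
Qed.

Lemma f_unitrP : forall x y, mul y x = one /\ mul x y = one -> unit x.
Proof.
elim/quotW=> x; elim/quotW=> y; rewrite pi_unit /unitf !piE => -[H _].
apply/negP => /eqP nx0; move/eqmodP: H => /=.
have -> : mulf y x = Fr ((orec (num y) (den x)).1 * den y) 0.
  by rewrite /mulf nx0 mulr0.
have nz : (orec (num y) (den x)).1 * den y != 0.
  by rewrite mulf_nz ?denP // (oreP _ (denP x)).1.
by move=> H; move: (eqv_01 nz); rewrite H.
Qed.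

Lemma f_invr_out : {in [predC unit], inv =1 id}.
Proof.
elim/quotW=> x; rewrite /in_mem /= pi_unit /unitf => nx; rewrite !piE.
by rewrite /invf (negbTE nx).
Qed.

HB.instance Definition _ := GRing.NzRing_hasMulInverse.Build type
  f_mulVr f_divrr f_unitrP f_invr_out.

Definition tofr (d : D) : type := \pi_type (Fr 1 d).

Lemma tofr_eq a b : (tofr a = tofr b) <-> a = b.
Proof.
split => [/eqmodP /eqvP /(_ 1 1)|->//].
by rewrite !den_Fr1 !num_Fr1 !mul1r => /(_ erefl).
Qed.

Lemma tofr_is_zmod_morphism : zmod_morphism tofr.
Proof.
move=> a b; have -> : tofr a - tofr b = add (tofr a) (opp (tofr b)) by [].
rewrite /tofr -pi_opp -pi_add; apply/eqmodP => /=; apply/eqvP => c d.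
rewrite den_Fr1 num_Fr1 den_addf num_addf den_oppf num_oppf !den_Fr1 !num_Fr1.
have [hu e] := oreP 1 (oner_neq0 D).
move: (orec 1 1) hu e => [u v] /= hu e H.
by rewrite !mulr1 in e H; rewrite -e H mulrN -mulrBr mulrA.
Qed.

HB.instance Definition _ := GRing.isZmodMorphism.Build D type tofr tofr_is_zmod_morphism.

Lemma tofr_is_monoid_morphism : monoid_morphism tofr.
Proof.
split; first by rewrite /tofr; have -> : (1 : type) = one by []; rewrite /one -lock.
move=> a b; have -> : tofr a * tofr b = mul (tofr a) (tofr b) by [].
rewrite /tofr -pi_mul; apply/eqmodP => /=; apply/eqvP => c d.
rewrite den_Fr1 num_Fr1 den_mulf num_mulf !den_Fr1 !num_Fr1.
have [hu e] := oreP a (oner_neq0 D).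
move: (orec a 1) hu e => [u v] /= hu e H.
by rewrite mulr1 in e; rewrite !mulr1 in H; rewrite -e H !mulrA.
Qed.

HB.instance Definition _ := GRing.isMonoidMorphism.Build D type tofr tofr_is_monoid_morphism.

Lemma tofr_unit d : (tofr d \is a GRing.unit) = (d != 0).
Proof. by rewrite [_ \is a _]pi_unit /unitf num_Fr1. Qed.

Lemma tofr_frac (q : type) : exists s r, s != 0 /\ q = (tofr s)^-1 * tofr r.
Proof.
elim/quotW: q => x; exists (den x), (num x); split; first exact: denP.
have -> : (tofr (den x))^-1 * tofr (num x) = mul (inv (tofr (den x))) (tofr (num x)) by [].
rewrite /tofr -pi_inv -pi_mul; apply/eqmodP => /=.
rewrite /invf num_Fr1 (denP x); apply/eqvP => c d.
rewrite !den_Fr1 den_mulf num_mulf !den_Fr1 !num_Fr1 num_Fr ?denP // den_Fr ?denP //.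
have [hu e] := oreP 1 (oner_neq0 D).
move: (orec 1 1) hu e => [u v] /= hu e H.
rewrite !mulr1 in e; rewrite -e mulrA; congr (_ * _); apply: (mulIf' (denP x)); by rewrite -mulrA.
Qed.

Lemma division (q : type) : q != 0 -> q \is a GRing.unit.
Proof.
elim/quotW: q => x nz; rewrite [_ \is a _]pi_unit /unitf; apply/eqP => n0.
move: nz; have -> : \pi_type x = 0.
  have -> : (0 : type) = \pi_type (Fr 1 0) by rewrite [LHS]/GRing.zero /= /zero -lock.
  apply/eqmodP => /=; apply/eqvP => c d; rewrite den_Fr1 num_Fr1 n0 !mulr0 //.
by rewrite eqxx.
Qed.

End OreFracS.
End OreFrac.
HB.export OreFrac.


Module RQuo.
Local Open Scope quotient_scope.
Section RQuoS.
Variable R : pzRingType.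
Variable P : R -> Prop.
Record QHyp : Prop := QHypI {
  P0 : P 0;
  PB : forall x y, P x -> P y -> P (x - y);
  PMl : forall x y, P y -> P (x * y);
  PMr : forall x y, P x -> P (x * y);
  P1 : ~ P 1 }.
Variable H : QHyp.
Let P0 := P0 H.
Let PB := PB H.
Let PMl := PMl H.
Let PMr := PMr H.
Let P1 := P1 H.

Lemma PN x : P x -> P (- x). Proof. by move=> h; rewrite -sub0r; apply: PB. Qed.
Lemma PD x y : P x -> P y -> P (x + y).
Proof. by move=> hx hy; rewrite -[y]opprK; apply: PB => //; apply: PN. Qed.

Definition eqR (x y : R) : bool := `[< P (x - y) >].
Lemma eqR_refl : reflexive eqR.
Proof. by move=> x; apply/asboolP; rewrite subrr; exact: P0. Qed.
Lemma eqR_sym : symmetric eqR.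
Proof.
by move=> x y; apply/asboolP/asboolP => h; rewrite -opprB; apply: PN.
Qed.
Lemma eqR_trans : transitive eqR.
Proof.
move=> y x z /asboolP h1 /asboolP h2; apply/asboolP.
by have := PD h1 h2; rewrite addrA subrK.
Qed.
Canonical eqR_equiv := EquivRel eqR eqR_refl eqR_sym eqR_trans.
Definition type := {eq_quot eqR}.
HB.instance Definition _ : EqQuotient _ eqR type := EqQuotient.on type.
HB.instance Definition _ := Choice.on type.

Lemma eqR_repr x : P (repr (\pi_type x) - x).
Proof. have := reprK (\pi_type x); move/eqmodP => /asboolP. done. Qed.

Definition zero : type := lift_cst type 0.
Definition one : type := lift_cst type 1.
Definition add := lift_op2 type +%R.
Definition opp := lift_op1 type -%R.
Definition mul := lift_op2 type *%R.

Lemma pi_add : {morph \pi : x y / x + y >-> add x y}.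
Proof.
move=> x y; unlock add; apply/eqmodP => /=; apply/asboolP.
rewrite opprD addrACA; apply: PD; rewrite -opprB; apply: PN; exact: eqR_repr.
Qed.
Canonical pi_add_morph := PiMorph2 pi_add.
Lemma pi_opp : {morph \pi : x / - x >-> opp x}.
Proof.
move=> x; unlock opp; apply/eqmodP => /=; apply/asboolP.
rewrite opprK addrC; exact: eqR_repr.
Qed.
Canonical pi_opp_morph := PiMorph1 pi_opp.
Lemma pi_mul : {morph \pi : x y / x * y >-> mul x y}.
Proof.
move=> x y; unlock mul; apply/eqmodP => /=; apply/asboolP.
set x' := repr _; set y' := repr _.
have -> : x * y - x' * y' = (x - x') * y + x' * (y - y').
  by rewrite mulrBl mulrBr addrA subrK.
apply: PD; [apply: PMr | apply: PMl]; rewrite -opprB; apply: PN; exact: eqR_repr.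
Qed.
Canonical pi_mul_morph := PiMorph2 pi_mul.
Canonical pi_zero_morph := PiConst zero.
Canonical pi_one_morph := PiConst one.

Lemma q_addA : associative add.
Proof. by elim/quotW=> x; elim/quotW=> y; elim/quotW=> z; rewrite !piE addrA. Qed.
Lemma q_addC : commutative add.
Proof. by elim/quotW=> x; elim/quotW=> y; rewrite !piE addrC. Qed.
Lemma q_add0r : left_id zero add.
Proof. by elim/quotW=> x; rewrite !piE add0r. Qed.
Lemma q_addNr : left_inverse zero opp add.
Proof. by elim/quotW=> x; rewrite !piE addNr. Qed.
HB.instance Definition _ := GRing.isZmodule.Build type q_addA q_addC q_add0r q_addNr.
Lemma q_mulA : associative mul.
Proof. by elim/quotW=> x; elim/quotW=> y; elim/quotW=> z; rewrite !piE mulrA. Qed.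
Lemma q_mul1r : left_id one mul.
Proof. by elim/quotW=> x; rewrite !piE mul1r. Qed.
Lemma q_mulr1 : right_id one mul.
Proof. by elim/quotW=> x; rewrite !piE mulr1. Qed.
Lemma q_mulDl : left_distributive mul add.
Proof. by elim/quotW=> x; elim/quotW=> y; elim/quotW=> z; rewrite !piE mulrDl. Qed.
Lemma q_mulDr : right_distributive mul add.
Proof. by elim/quotW=> x; elim/quotW=> y; elim/quotW=> z; rewrite !piE mulrDr. Qed.
Lemma q_one_neq0 : one != zero.
Proof. by rewrite !piE; apply/negP => /asboolP; rewrite subr0. Qed.
HB.instance Definition _ := GRing.Zmodule_isNzRing.Build type
  q_mulA q_mul1r q_mulr1 q_mulDl q_mulDr q_one_neq0.

Definition piR (x : R) : type := \pi_type x.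

Lemma piR_eq x y : piR x = piR y <-> P (x - y).
Proof. by split => [/eqmodP /asboolP //| h]; apply/eqmodP/asboolP. Qed.

Lemma piR_is_zmod_morphism : zmod_morphism piR.
Proof.
move=> a b; have -> : piR a - piR b = add (piR a) (opp (piR b)) by [].
by rewrite /piR -pi_opp -pi_add.
Qed.
HB.instance Definition _ := GRing.isZmodMorphism.Build R type piR piR_is_zmod_morphism.
Lemma piR_is_monoid_morphism : monoid_morphism piR.
Proof.
split; first by rewrite /piR; have -> : (1 : type) = one by []; rewrite /one -lock.
move=> a b; have -> : piR a * piR b = mul (piR a) (piR b) by [].
by rewrite /piR -pi_mul.
Qed.
HB.instance Definition _ := GRing.isMonoidMorphism.Build R type piR piR_is_monoid_morphism.

Lemma piR0 x : (piR x = 0) <-> P x.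
Proof. by rewrite -(rmorph0 piR) piR_eq subr0. Qed.

Lemma piR_surj (q : type) : exists x, q = piR x.
Proof. by elim/quotW: q => x; exists x. Qed.

End RQuoS.
End RQuo.
HB.export RQuo.

Local Open Scope classical_set_scope.


Section Basics.
Variable R : pzRingType.
Implicit Types S T : set R.

Definition ass S : set R := [set r | exists s, S s /\ s * r = 0].

Lemma den1 S : left_den_set S -> S 1. Proof. by case=> [[[]]]. Qed.
Lemma den0 S : left_den_set S -> ~ S 0. Proof. by case=> [[[_ []]]]. Qed.
Lemma denM S : left_den_set S -> forall a b, S a -> S b -> S (a * b).
Proof. by case=> [[[_ []]]]. Qed.
Lemma denO S : left_den_set S -> forall r s, S s -> exists s' r', S s' /\ s' * r = r' * s.
Proof. by case=> [[]]. Qed.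
Lemma denR S : left_den_set S -> forall r s, S s -> r * s = 0 -> exists t, S t /\ t * r = 0.
Proof. by case. Qed.

Lemma ass0 S : left_den_set S -> ass S 0.
Proof. by move=> hS; exists 1; rewrite mulr0; split => //; exact: den1. Qed.

Lemma assB S : left_den_set S -> forall x y, ass S x -> ass S y -> ass S (x - y).
Proof.
move=> hS x y [s1 [h1 e1]] [s2 [h2 e2]].
have [s' [r' [hs' e]]] := denO hS s2 h1.
exists (s' * s2); split; first exact: denM.
by rewrite mulrBr -!mulrA e2 mulr0 subr0 mulrA e -mulrA e1 mulr0.
Qed.

Lemma assMl S : left_den_set S -> forall x y, ass S y -> ass S (x * y).
Proof.
move=> hS x y [s [h e]].
have [s' [r' [hs' e']]] := denO hS x h.
by exists s'; split => //; rewrite mulrA e' -mulrA e mulr0.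
Qed.

Lemma assMr S : left_den_set S -> forall x y, ass S x -> ass S (x * y).
Proof. by move=> hS x y [s [h e]]; exists s; split => //; rewrite mulrA e mul0r. Qed.

Lemma ass_notS S : left_den_set S -> forall x, S x -> ~ ass S x.
Proof.
move=> hS x hx [s [hs e]]; apply: (den0 hS); rewrite -e; exact: denM.
Qed.

End Basics.

Lemma prod_zero (A : pzRingType) n (F : 'I_n -> A) j : F j = 0 -> \prod_(i < n) F i = 0.
Proof.
elim: n F j => [|n IH] F j; first by case: j.
rewrite big_ord_recl; case: (unliftP ord0 j) => [j' ->|->] h.
  by rewrite (IH (fun i => F (lift ord0 i)) j' h) mulr0.
by rewrite h mul0r.
Qed.

Section Part2.
Variables (R : pzRingType) (n : nat) (S' : 'I_n -> set R) (Q : 'I_n -> unitRingType)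
  (sigma : forall i, {rmorphism R -> Q i}).
Hypothesis H : cond2_data S' sigma.

Definition U i : set R := [set r | sigma i r \is a GRing.unit].

Lemma divi i (q : Q i) : (q \is a GRing.unit) = (q != 0).
Proof.
case: H => _ [_ [hd _]]; apply/idP/idP; last exact: hd.
by apply: contraTneq => ->; rewrite unitr0.
Qed.

Lemma inj_sig r1 r2 : (forall i, sigma i r1 = sigma i r2) -> r1 = r2.
Proof. by case: H => _ [_ [_ hi]]; exact: hi. Qed.

Lemma U_den i : left_den_set (U i).
Proof.
have [_ [hl _]] := H; have [hu [hf hk]] := hl i.
split; [split; [split; [|split]|]|].
- by rewrite /U /= rmorph1 unitr1.
- by rewrite /U /= rmorph0 unitr0.
- by move=> a b ha hb; rewrite /U /= rmorphM unitrMl.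
- move=> r s hs.
  have [t [u [ht e]]] := hf (sigma i r * (sigma i s)^-1).
  have e2 : sigma i (t * r - u * s) = 0.
    rewrite rmorphB !rmorphM; apply/eqP; rewrite subr_eq0; apply/eqP.
    have -> : sigma i u = sigma i t * (sigma i r * (sigma i s)^-1).
      by rewrite e mulrA divrr ?hu // mul1r.
    by rewrite -!mulrA mulVr ?mulr1.
  have [t' [ht' e3]] := (hk _).1 e2.
  exists (t' * t), (t' * u); split; first by rewrite /U /= rmorphM unitrMl ?hu.
  by apply/eqP; rewrite -subr_eq0 -mulrA -mulrA -mulrBr e3.
- move=> r s hs e.
  have e2 : sigma i r = 0.
    have := congr1 (sigma i) e; rewrite rmorphM rmorph0 => e'.
    by rewrite -[sigma i r]mulr1 -(divrr hs) mulrA e' mul0r.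
  have [t [ht e3]] := (hk _).1 e2.
  by exists t; split => //; rewrite /U /= hu.
Qed.

Lemma S'_sub_U i : S' i `<=` U i.
Proof. by have [_ [hl _]] := H; have [hu _] := hl i; move=> x hx; exact: hu. Qed.

Lemma U_nz i r : U i r <-> sigma i r != 0.
Proof. by rewrite /U /= divi. Qed.

Lemma den_sub_U T : left_den_set T -> exists i, T `<=` U i.
Proof.
move=> hT; apply: contrapT => hn.
have hall : forall i, exists t, T t /\ ~ U i t.
  move=> i; apply: contrapT => hh; apply: hn; exists i => t ht.
  by apply: contrapT => hu; apply: hh; exists t.
have [f hf] := choice hall.
have hT0 : T (\prod_(i < n) f i).
  apply: (big_ind T) => //; [exact: den1 | exact: denM | by move=> i _; case: (hf i)].
apply: (den0 hT); suff -> : 0 = \prod_(i < n) f i by [].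
apply: inj_sig => j; rewrite rmorph0 rmorph_prod.
apply/esym/(prod_zero (j := j)).
case: (hf j) => _; rewrite U_nz => /negP; by rewrite negbK => /eqP.
Qed.

Lemma localizable2 : left_localizable R.
Proof.
move=> r r0.
have [i hi] : exists i, sigma i r != 0.
  apply: contrapT => hn; move/eqP: r0; apply; apply: inj_sig => i; rewrite rmorph0.
  apply: contrapT => hh; apply: hn; exists i; exact/eqP.
by exists (U i); split; [exact: (@U_den i) | apply/U_nz].
Qed.

Lemma maxDen_sub : maxDen_l R `<=` U @` setT.
Proof.
move=> S [hS hmax]; have [i hi] := den_sub_U hS.
by exists i => //; apply: hmax => //; exact: U_den.
Qed.

Lemma finite2 : finite_set (maxDen_l R).
Proof.
apply: (sub_finite_set maxDen_sub); apply: finite_image; exact: finite_finset.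
Qed.

Hypothesis Hmin : forall j : 'I_n, ~ (forall r1 r2 : R,
        (forall i, i != j -> sigma i r1 = sigma i r2) -> r1 = r2).

Lemma U_sub_eq i j : U i `<=` U j -> i = j.
Proof.
move=> hij; apply/eqP; apply: contrapT => /negP ne.
apply: (@Hmin i) => r1 r2 h; apply: inj_sig => k.
have [->|nk] := eqVneq k i; last exact: h.
have hj : sigma j (r1 - r2) = 0 by rewrite rmorphB h 1?eq_sym // subrr.
apply/eqP; rewrite -subr_eq0 -rmorphB; apply: contrapT => /negP hnz.
have := hij _ (proj2 (U_nz _ _) hnz); rewrite U_nz hj; by rewrite eqxx.
Qed.

Lemma U_max i : maxDen_l R (U i).
Proof.
split; first exact: U_den.
move=> T hT hsub; have [j hj] := den_sub_U hT.
have eij := U_sub_eq (subset_trans hsub hj); subst j.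
by apply/seteqP; split.
Qed.

Lemma maxDen_eq : maxDen_l R = U @` setT.
Proof.
apply/seteqP; split; first exact: maxDen_sub.
by move=> _ [i _ <-]; exact: U_max.
Qed.

Lemma card2 : (maxDen_l R #= `I_n)%card.
Proof.
rewrite maxDen_eq; apply: card_eq_trans (card_esym card_II).
apply: inj_card_eq => i j _ _ e; apply: U_sub_eq; rewrite e //.
Qed.

End Part2.


Inductive gen (R : pzRingType) (A : set R) : R -> Prop :=
| gen1 : gen A 1
| genM a m : A a -> gen A m -> gen A (a * m).

Section Gen.
Variable R : pzRingType.
Implicit Types A S T : set R.

Lemma gen_mul A m1 m2 : gen A m1 -> gen A m2 -> gen A (m1 * m2).
Proof.
elim=> [|a m ha hm IH] h2; first by rewrite mul1r.
by rewrite -mulrA; apply: genM => //; exact: IH.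
Qed.

Lemma gen_sub A : A `<=` gen A.
Proof. by move=> a ha; rewrite -[a]mulr1; apply: genM => //; exact: gen1. Qed.

Lemma gen_den A :
  (forall a, A a -> forall r, exists u r', gen A u /\ u * r = r' * a) ->
  (forall a, A a -> forall r, r * a = 0 -> exists u, gen A u /\ u * r = 0) ->
  ~ gen A 0 -> left_den_set (gen A).
Proof.
move=> hO hR h0; split; [split; [split; [exact: gen1|split => //]|]|].
- by move=> a b; exact: gen_mul.
- move=> r s hs; elim: hs r => [|a m ha hm IH] r.
    by exists 1, r; split; [exact: gen1 | rewrite mul1r mulr1].
  have [u0 [r0 [hu0 e0]]] := IH r.
  have [u1 [r1 [hu1 e1]]] := hO a ha r0.
  exists (u1 * u0), r1; split; first exact: gen_mul.
  by rewrite -mulrA e0 mulrA e1 mulrA.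
- move=> r s hs; elim: hs r => [|a m ha hm IH] r.
    by rewrite mulr1 => ->; exists 1; split; [exact: gen1 | rewrite mulr0].
  rewrite mulrA => /IH [u0 [hu0 e0]].
  have [u1 [hu1 e1]] : exists u, gen A u /\ u * (u0 * r) = 0.
    by apply: (hR a ha (u0 * r)); rewrite -mulrA e0.
  by exists (u1 * u0); split; [exact: gen_mul | rewrite -mulrA].
Qed.

Hypothesis Hloc : left_localizable R.

Lemma reduced (x : R) : x * x = 0 -> x = 0.
Proof.
move=> e; apply: contrapT => /eqP x0; have [S [hS hx]] := Hloc x0.
by apply: (den0 hS); rewrite -e; apply: denM.
Qed.

Lemma revz (a b : R) : a * b = 0 -> b * a = 0.
Proof. by move=> e; apply: reduced; rewrite mulrA -(mulrA b) e mulr0 mul0r. Qed.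

Lemma ifp (a b r : R) : a * b = 0 -> a * r * b = 0.
Proof.
move=> e; apply: reduced; have e' := revz e.
by rewrite -!mulrA (mulrA b) e' mul0r !mulr0.
Qed.

Lemma sym3 (a b c : R) : a * b * c = 0 -> a * c * b = 0.
Proof.
move=> e.
have e1 : c * (a * b) = 0 by apply: revz.
have e2 : c * a * b = 0 by rewrite -mulrA.
have e3 : c * b * (a * b) = 0 by apply: ifp.
have e4 : c * b * a * c * b = 0 by apply: ifp; rewrite -mulrA.
apply: reduced.
have -> : a * c * b * (a * c * b) = a * (c * b * a * c * b) by rewrite !mulrA.
by rewrite e4 mulr0.
Qed.

Lemma swap4 (x a b y : R) : x * a * b * y = 0 -> x * b * a * y = 0.
Proof.
move=> e.
have e1 : y * x * a * b = 0 by rewrite -!mulrA; apply: revz; rewrite !mulrA.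
have e2 := sym3 e1.
by apply: revz; rewrite !mulrA.
Qed.

Lemma gen2_zero S T : left_den_set S -> left_den_set T ->
  gen (S `|` T) 0 -> exists s t, S s /\ T t /\ s * t = 0.
Proof.
move=> hS hT.
suff H : forall m, gen (S `|` T) m -> exists s t, [/\ S s, T t &
     forall r, r * m = 0 -> r * s * t = 0].
  move=> /H [s [t [hs ht hr]]]; exists s, t; split => //; split => //.
  by rewrite -[s]mul1r; apply: hr; rewrite mulr0.
move=> m0; elim=> [|a m ha hm [s [t [hs ht IH]]]].
  exists 1, 1; split; [exact: den1 | exact: den1 |].
  by move=> r; rewrite !mulr1.
case: ha => ha.
  exists (a * s), t; split => //; first exact: denM.
  by move=> r; rewrite mulrA => /IH; rewrite mulrA.
exists s, (a * t); split => //; first exact: denM.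
move=> r; rewrite mulrA => /IH e; rewrite mulrA; apply: swap4.
exact: e.
Qed.

End Gen.


Lemma exists_max (R : pzRingType) (T : set R) : left_den_set T ->
  exists S, maxDen_l R S /\ T `<=` S.
Proof.
move=> hT.
pose P := fun X : set R => X = set0 \/ (left_den_set X /\ T `<=` X).
have [|A [PA Amax]] := @Zorn_bigcup R P.
  move=> F FP Ftot.
  have denF : forall X x, F X -> X x -> left_den_set X.
    move=> X x FX Xx; case: (FP X FX) => [X0|[]//]; by rewrite X0 in Xx.
  have [[X0 [FX0 X0n]]|hn] := pselect (exists X, F X /\ X <> set0).
    have [X0e|[hX0 TX0]] := FP X0 FX0; first by [].
    right; split; last by move=> x Tx; exists X0 => //; exact: TX0.
    split; [split; [split; [|split]|]|].
    - by exists X0 => //; exact: den1.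
    - by move=> [X FX X0']; apply: (den0 (denF X 0 FX X0')).
    - move=> a b [X FX Xa] [Y FY Yb].
      have [XY|YX] := Ftot X Y FX FY.
        by exists Y => //; apply: (denM (denF Y b FY Yb)) => //; exact: XY.
      by exists X => //; apply: (denM (denF X a FX Xa)) => //; exact: YX.
    - move=> r s [X FX Xs]; have [s' [r' [h e]]] := denO (denF X s FX Xs) r Xs.
      by exists s', r'; split => //; exists X.
    - move=> r s [X FX Xs] e; have [t [h e']] := denR (denF X s FX Xs) Xs e.
      by exists t; split => //; exists X.
  left; apply/seteqP; split=> [x [X FX Xx]|//]; apply: hn; exists X; split => //.
  by move=> X0; rewrite X0 in Xx.
have [A0|[hA TA]] := PA.
  exfalso; apply: (Amax T); last by right; split.
  rewrite A0; split => // /(_ 1 (den1 hT)) //.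
exists A; split => //; split => // B hB AB.
apply: contrapT => BA; apply: (Amax B); last by right; split => //; exact: subset_trans AB.
split => // BA'; apply: BA; apply/seteqP; split => //.
Qed.


Lemma prod_ideal (A : pzRingType) (I : set A) n (F : 'I_n -> A) j :
  (forall x y, I y -> I (x * y)) -> (forall x y, I x -> I (x * y)) ->
  I (F j) -> I (\prod_(i < n) F i).
Proof.
move=> hl hr; elim: n F j => [|n IH] F j; first by case: j.
rewrite big_ord_recl; case: (unliftP ord0 j) => [j' ->|->] h.
  by apply: hl; exact: (IH (fun i => F (lift ord0 i)) j').
by apply: hr.
Qed.

Section Crux.
Variable R : pzRingType.
Hypothesis Hloc : left_localizable R.
Variables (n : nat) (f : 'I_n -> set R).
Hypothesis Hf : maxDen_l R = f @` setT.

Lemma in_some_max y : y != 0 -> exists j, f j y.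
Proof.
move=> y0; have [T [hT Ty]] := Hloc y0.
have [S [hS TS]] := exists_max hT.
have : (f @` setT) S by rewrite -Hf.
by case=> j _ e; exists j; rewrite e; exact: TS.
Qed.

Lemma maxf j : maxDen_l R (f j).
Proof. by rewrite Hf; exists j. Qed.

Lemma L1 S S' : maxDen_l R S -> maxDen_l R S' ->
  (forall x, S x -> ~ ass S' x) -> S = S'.
Proof.
move=> [hS mS] [hS' mS'] hdis.
pose A := S `|` S'.
have hG : left_den_set (gen A).
  apply: gen_den.
  - move=> a [ha|ha] r.
      have [s' [r' [h e]]] := denO hS r ha.
      by exists s', r'; split => //; apply: gen_sub; left.
    have [s' [r' [h e]]] := denO hS' r ha.
    by exists s', r'; split => //; apply: gen_sub; right.
  - move=> a [ha|ha] r e.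
      have [t [h e']] := denR hS ha e.
      by exists t; split => //; apply: gen_sub; left.
    have [t [h e']] := denR hS' ha e.
    by exists t; split => //; apply: gen_sub; right.
  - move=> /(gen2_zero Hloc hS hS') [s [t [hs [ht e]]]].
    have [t' [ht' e']] := denR hS' ht e.
    by apply: (hdis s hs); exists t'.
have e1 : gen A = S by apply: mS => // x hx; apply: gen_sub; left.
have e2 : gen A = S' by apply: mS' => // x hx; apply: gen_sub; right.
by rewrite -e1 -e2.
Qed.

Section OneMax.
Variable S : set R.
Hypothesis hSm : maxDen_l R S.
Let hS : left_den_set S := proj1 hSm.

Lemma c_exists : exists c, S c /\ forall j, f j <> S -> ass (f j) c.
Proof.
have hall : forall j, exists c, S c /\ (f j <> S -> ass (f j) c).
  move=> j; have [e|ne] := pselect (f j = S).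
    by exists 1; split => //; exact: den1.
  apply: contrapT => hn; apply: ne; apply/esym/L1 => //; first exact: maxf.
  move=> x hx ha; apply: hn; exists x; split => //.
have [c hc] := choice hall.
exists (\prod_(i < n) c i); split.
  by apply: (big_ind S) => //; [exact: den1 | exact: denM | move=> i _; case: (hc i)].
move=> j ne; apply: (prod_ideal (j := j)).
- by move=> x y; apply: assMl; exact: (proj1 (maxf j)).
- by move=> x y; apply: assMr; exact: (proj1 (maxf j)).
- by case: (hc j) => _; apply.
Qed.

Variable c : R.
Hypothesis hc : S c.
Hypothesis hcj : forall j, f j <> S -> ass (f j) c.

Lemma cy y : ~ ass S y -> S (c * y).
Proof.
move=> hy.
have cy0 : c * y != 0.
  by apply/eqP => e; apply: hy; exists c.
have [j hj] := in_some_max cy0.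
have [e|ne] := pselect (f j = S); first by rewrite -e.
exfalso; apply: (ass_notS (proj1 (maxf j)) hj).
by apply: (assMr (proj1 (maxf j))); exact: (@hcj j ne).
Qed.

Lemma compl_mul y z : ~ ass S y -> ~ ass S z -> ~ ass S (y * z).
Proof.
move=> hy hz hyz; have hcy := cy hy.
have : ass S (c * y * z) by rewrite -mulrA; apply: assMl.
move=> [t [ht e]]; apply: hz; exists (t * (c * y)); split; first exact: denM.
by rewrite -mulrA.
Qed.

Lemma crux x : ~ ass S x -> S x.
Proof.
move=> hx.
pose A := S `|` [set x].
have hG : left_den_set (gen A).
  apply: gen_den.
  - move=> a [ha|->] r.
      have [s' [r' [h e]]] := denO hS r ha.
      by exists s', r'; split => //; apply: gen_sub; left.
    have [s' [r' [h e]]] := denO hS r (cy hx).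
    exists s', (r' * c); split; first by apply: gen_sub; left.
    by rewrite e mulrA.
  - move=> a [ha|->] r e.
      have [t [h e']] := denR hS ha e.
      by exists t; split => //; apply: gen_sub; left.
    have [s' [r' [h e1]]] := denO hS r hc.
    have e2 : r' * (c * x) = 0 by rewrite mulrA -e1 -mulrA e mulr0.
    have [t [ht e3]] := denR hS (cy hx) e2.
    exists (t * s'); split; first by apply: gen_sub; left; exact: denM.
    by rewrite -mulrA e1 mulrA e3 mul0r.
  - suff H : forall m, gen A m -> ~ ass S m.
      by move=> /H; apply; exact: ass0.
    move=> m; elim => [|a m0 ha hm IH].
      by apply: ass_notS => //; exact: den1.
    apply: compl_mul => //; case: ha => [ha|->] //.
    exact: ass_notS.
have e1 : gen A = S by apply: (proj2 hSm) => // y hy; apply: gen_sub; left.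
by rewrite -e1; apply: gen_sub; right.
Qed.

End OneMax.
End Crux.


Section Build.
Variable R : pzRingType.
Hypothesis Hloc : left_localizable R.
Variables (n : nat) (f : 'I_n -> set R).
Hypothesis Hf : maxDen_l R = f @` setT.
Variable S : set R.
Hypothesis hSm : maxDen_l R S.
Let hS : left_den_set S := proj1 hSm.

Lemma crux' x : ~ ass S x -> S x.
Proof.
have [c [hc hcj]] := c_exists Hloc Hf hSm.
exact: (crux Hloc Hf hSm hc hcj).
Qed.

Lemma qh : RQuo.QHyp (ass S).
Proof.
split.
- exact: ass0.
- exact: assB.
- exact: assMl.
- exact: assMr.
- by apply: ass_notS => //; exact: den1.
Qed.

Local Notation Dq := (RQuo.type qh).
Definition piD : R -> Dq := RQuo.piR qh.

Lemma piD0 x : piD x = 0 <-> ass S x.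
Proof. exact: RQuo.piR0. Qed.

Lemma dom_D (a b : Dq) : a * b = 0 -> a = 0 \/ b = 0.
Proof.
have [x ->] := RQuo.piR_surj a; have [y ->] := RQuo.piR_surj b.
rewrite -rmorphM; move=> /piD0 hxy; rewrite !piD0.
have [hx|hx] := pselect (ass S x); first by left.
have [hy|hy] := pselect (ass S y); first by right.
exfalso; apply: (ass_notS hS _ hxy); apply: denM => //; exact: crux'.
Qed.

Lemma ore_D (a b : Dq) : b != 0 -> exists u v, u != 0 /\ u * a = v * b.
Proof.
have [r ->] := RQuo.piR_surj a; have [s ->] := RQuo.piR_surj b.
move=> /eqP hs; have Ss : S s by apply: crux' => /piD0.
have [s' [r' [hs' e]]] := denO hS r Ss.
exists (piD s'), (piD r'); split; last by rewrite /piD -!rmorphM e.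
by apply/eqP => /piD0; apply: ass_notS.
Qed.

Local Notation Qt := (OreFrac.type dom_D ore_D).
Definition sig_fun (r : R) : Qt := OreFrac.tofr dom_D ore_D (piD r).

Lemma sig_zmod : zmod_morphism sig_fun.
Proof. by move=> a b; rewrite /sig_fun /piD !rmorphB. Qed.
HB.instance Definition _ := GRing.isZmodMorphism.Build R Qt sig_fun sig_zmod.
Lemma sig_monoid : monoid_morphism sig_fun.
Proof. by split => [|a b]; rewrite /sig_fun /piD ?rmorph1 ?rmorphM. Qed.
HB.instance Definition _ := GRing.isMonoidMorphism.Build R Qt sig_fun sig_monoid.

Definition QtU : unitRingType := Qt.
Definition sigL : {rmorphism R -> QtU} := sig_fun.

Lemma sig_loc : is_left_localization S sigL.
Proof.
have sig0 r : sigL r = 0 <-> ass S r.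
  rewrite -piD0 /= /sig_fun; split => [|->]; last exact: rmorph0.
  by rewrite -(rmorph0 (OreFrac.tofr dom_D ore_D)) => /OreFrac.tofr_eq.
split; [|split].
- move=> s Ss; rewrite /= /sig_fun OreFrac.tofr_unit; apply/eqP => /piD0.
  exact: ass_notS.
- move=> q; have [s0 [r0 [s00 ->]]] := OreFrac.tofr_frac q.
  have [s es] := RQuo.piR_surj s0; have [r er] := RQuo.piR_surj r0.
  exists s, r; split; last by rewrite es er.
  apply: crux' => /piD0 h; move/eqP: s00; apply; rewrite es; exact: h.
- move=> r; rewrite sig0; split => //.
Qed.

Lemma sig_div : division_ring QtU.
Proof. move=> x; exact: OreFrac.division. Qed.

Lemma sig_nz r : S r -> sigL r != 0.
Proof.
move=> Sr; have [hu _] := sig_loc; apply/eqP => e.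
by have := hu r Sr; rewrite e unitr0.
Qed.

End Build.

Unset Implicit Arguments.


Lemma enum_fin (R : Type) (M : set (set R)) : finite_set M ->
  exists n (f : 'I_n -> set R), M = f @` setT.
Proof.
move=> [n H]; exists n.
have H2 : ([set: 'I_n] #= M)%card by apply: card_eq_trans (card_esym card_II) (card_esym H).
have /pcard_eqP/bijPex[g [Hf Hi Hs]] := H2.
exists g; apply/seteqP; split => // x.
move=> [i _ <-]; exact: Hf.
Qed.

Theorem theorem3p8 (R : pzRingType) :
  ((left_localizable R /\ finite_set (maxDen_l R)) <->
   (exists (n : nat) (S' : 'I_n -> set R) (Q : 'I_n -> unitRingType)
      (sigma : forall i, {rmorphism R -> Q i}), cond2_data S' sigma)) /\
  (forall (n : nat) (S' : 'I_n -> set R) (Q : 'I_n -> unitRingType)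
      (sigma : forall i, {rmorphism R -> Q i}),
    cond2_data S' sigma ->
    (* no R_j can be omitted keeping sigma injective *)
    (forall j : 'I_n, ~ (forall r1 r2 : R,
        (forall i, i != j -> sigma i r1 = sigma i r2) -> r1 = r2)) ->
    (maxDen_l R #= `I_n)%card /\
    maxDen_l R = [set [set r | sigma i r \is a GRing.unit] | i in [set: 'I_n]]).
Proof.
split.
  split.
    move=> [Hloc Hfin]; have [n [f Hf]] := @enum_fin _ _ Hfin.
    exists n, f, (fun i => QtU Hloc Hf (maxf Hf i)), (fun i => sigL Hloc Hf (maxf Hf i)).
    split; [|split; [|split]].
    - by move=> i; exact: (proj1 (maxf Hf i)).
    - by move=> i; exact: sig_loc.
    - by move=> i; exact: sig_div.
    - move=> r1 r2 h; apply/eqP; rewrite -subr_eq0; apply/negP => /negP nz.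
      have [j hj] := in_some_max Hloc Hf nz.
      have := sig_nz Hloc Hf (maxf Hf j) hj; rewrite rmorphB h subrr eqxx //.
  move=> [n [S' [Q [sigma H]]]]; split; [exact: localizable2 H | exact: finite2 H].
move=> n S' Q sigma H Hmin; split; [exact: card2 H Hmin | exact: maxDen_eq H Hmin].
Qed.
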